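(* Let $\mathbb{G}\subset\mathbb{N}$ be a finite set with $0\in\mathbb{G}$, let $\ell\in\mathbb{N}$, and define the symmetric array $$\mathbb{S}=\mathbb{S}(\mathbb{G},\ell)\triangleq\mathbb{G}\cup(\max\mathbb{G}-\mathbb{G}+\ell).$$ If $\mathbb{G}-\mathbb{G}\supseteq[0:\max\mathbb{G}]$ and $\mathbb{G}+\mathbb{G}\supseteq[0:\ell-1]$, then $\mathbb{S}+\mathbb{S}=[0:2\max\mathbb{S}]$.
   Context: For finite sets $\mathbb{A},\mathbb{B}\subset\mathbb{Z}$ and $c\in\mathbb{Z}$: $\mathbb{A}+\mathbb{B}=\{a+b: a\in\mathbb{A},b\in\mathbb{B}\}$, $\mathbb{A}-\mathbb{B}=\{a-b: a\in\mathbb{A},b\in\mathbb{B}\}$, $c-\mathbb{A}=\{c-a:a\in\mathbb{A}\}$, $\mathbb{A}+c=\{a+c:a\in\mathbb{A}\}$. For $a,b\in\mathbb{R}$, $[a:b]=\{c\in\mathbb{Z}: a\le c\le b\}$ (empty if $b<a$). $\mathbb{N}$ includes $0$. *)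

(* Defs.v *)
(* Finite sets of integers are represented as finite sets
   {fset int} (mathcomp-finmap); N is embedded in Z via Posz. *)
From mathcomp Require Import all_boot all_order all_algebra.
From mathcomp Require Import finmap.
Set Implicit Arguments. Unset Strict Implicit. Unset Printing Implicit Defensive.
Import Order.TTheory GRing.Theory Num.Theory.
Local Open Scope ring_scope.
Local Open Scope fset_scope.

Definition sumset (A B : {fset int}) : {fset int} := [fset (a + b)%R | a in A, b in B].
Definition diffset (A B : {fset int}) : {fset int} := [fset (a - b)%R | a in A, b in B].
Definition csub (c : int) (A : {fset int}) : {fset int} := [fset (c - a)%R | a in A].
Definition shift (A : {fset int}) (c : int) : {fset int} := [fset (a + c)%R | a in A].

(* maximum of a finite set of integers (used only for nonempty sets) *)
Definition fmax (A : {fset int}) : int := \big[Order.max/0]_(a <- A) a.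

Definition in_interval (a b c : int) : bool := (a <= c) && (c <= b).

Definition symarray (G : {fset int}) (l : nat) : {fset int} :=
  G `|` shift (csub (fmax G) G) (Posz l).

(* Main.v *)
Require Import Defs.
From mathcomp Require Import all_boot all_order all_algebra.
From mathcomp Require Import finmap.
From mathcomp Require Import zify.
Import Order.TTheory GRing.Theory Num.Theory.
Local Open Scope fset_scope.
Local Open Scope ring_scope.

Lemma sumsetP (A B : {fset int}) c :
  reflect (exists a b, [/\ a \in A, b \in B & c = a + b]) (c \in sumset A B).
Proof.
apply: (iffP (imfset2P _ _ _ _ _)).
  by move=> [a Ha [b Hb ->]]; exists a, b.
by move=> [a [b [Ha Hb ->]]]; exists a => //; exists b.
Qed.

Lemma diffsetP (A B : {fset int}) c :
  reflect (exists a b, [/\ a \in A, b \in B & c = a - b]) (c \in diffset A B).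
Proof.
apply: (iffP (imfset2P _ _ _ _ _)).
  by move=> [a Ha [b Hb ->]]; exists a, b.
by move=> [a [b [Ha Hb ->]]]; exists a => //; exists b.
Qed.

Lemma symP (G : {fset int}) l c :
  reflect (c \in G \/ exists g, g \in G /\ c = fmax G - g + Posz l)
    (c \in symarray G l).
Proof.
rewrite /symarray in_fsetU; apply: (iffP orP) => -[H|H]; [by left| |by left|].
  right; case/imfsetP: H => x /= /imfsetP [g /= Hg ->] ->; by exists g.
right; case: H => g [Hg ->]; apply/imfsetP; exists (fmax G - g) => //.
by apply/imfsetP; exists g.
Qed.

Lemma seqmax_ge (s : seq int) x : x \in s -> x <= \big[Order.max/0]_(a <- s) a.
Proof.
elim: s => [|a s IH] //=.
rewrite big_cons inE => /orP [/eqP ->|/IH H]; first by rewrite le_max lexx.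
by rewrite le_max H orbT.
Qed.

Lemma seqmax_le (s : seq int) b : 0 <= b -> (forall x, x \in s -> x <= b) ->
  \big[Order.max/0]_(a <- s) a <= b.
Proof.
move=> b0; elim: s => [|a s IH] H; first by rewrite big_nil.
rewrite big_cons ge_max H ?inE ?eqxx //= IH // => x Hx.
by apply: H; rewrite inE Hx orbT.
Qed.

Lemma fmax_ge (A : {fset int}) x : x \in A -> x <= fmax A.
Proof. exact: seqmax_ge. Qed.

Lemma fmax_le (A : {fset int}) b : 0 <= b -> (forall x, x \in A -> x <= b) -> fmax A <= b.
Proof. exact: seqmax_le. Qed.

Theorem theorem1 (G : {fset int}) (l : nat) :
  (forall g, g \in G -> 0 <= g) ->
  0 \in G ->
  (forall c : int, in_interval 0 (fmax G) c -> c \in diffset G G) ->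
  (forall c : int, in_interval 0 (Posz l - 1) c -> c \in sumset G G) ->
  forall c : int,
    (c \in sumset (symarray G l) (symarray G l)) =
    in_interval 0 (2 * fmax (symarray G l)) c.
Proof.
move=> Gpos G0 Hdiff Hsum c.
set M := fmax G.
have M0 : 0 <= M by apply: fmax_ge.
have Sb : forall s, s \in symarray G l -> 0 <= s <= M + Posz l.
  move=> s /symP [Hs|[g [Hg ->]]].
    have := Gpos _ Hs; have := (@fmax_ge G _ Hs); rewrite -/M; lia.
  have := Gpos _ Hg; have := (@fmax_ge G _ Hg); rewrite -/M; lia.
have HS : fmax (symarray G l) = M + Posz l.
  apply/eqP; rewrite eq_le; apply/andP; split.
    by apply: fmax_le; [lia| by move=> x /Sb /andP []].
  apply: fmax_ge; apply/symP; right; exists 0; split => //; lia.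
rewrite HS /in_interval; apply/idP/idP.
  case/sumsetP => a [b [/Sb Ha /Sb Hb ->]]; lia.
move=> Hc.
have inG : forall g, g \in G -> g \in symarray G l by move=> g Hg; apply/symP; left.
have inH : forall g, g \in G -> M - g + Posz l \in symarray G l.
  by move=> g Hg; apply/symP; right; exists g.
case: (ltP c (Posz l)) => Hcl.
  have /sumsetP [a [b [Ha Hb ->]]] : c \in sumset G G by apply: Hsum; rewrite /in_interval; lia.
  by apply/sumsetP; exists a, b; split; auto.
case: (leP c (M + Posz l)) => Hc2.
  have /diffsetP [a [b [Ha Hb E]]] : M + Posz l - c \in diffset G G.
    by apply: Hdiff; rewrite /in_interval; lia.
  apply/sumsetP; exists b, (M - a + Posz l); split; auto; lia.
case: (leP c (2 * M + Posz l)) => Hc3.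
  have /diffsetP [a [b [Ha Hb E]]] : c - M - Posz l \in diffset G G.
    by apply: Hdiff; rewrite /in_interval; lia.
  apply/sumsetP; exists a, (M - b + Posz l); split; auto; lia.
have /sumsetP [a [b [Ha Hb E]]] : 2 * M + 2 * Posz l - c \in sumset G G.
  by apply: Hsum; rewrite /in_interval; lia.
apply/sumsetP; exists (M - a + Posz l), (M - b + Posz l); split; auto; lia.
Qed.
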